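(* If $\vec t\succ^*\vec t'_1$ and $\vec t\succ^*\vec t'_2$, then there is a term distribution $\vec t''$ such that $\vec t'_1\succ^*\vec t''$ and $\vec t'_2\succ^*\vec t''$.
   Context: Calculus. Pure values: $v,w::=x\mid\lambda x.\vec{s}\mid *\mid (v_1,v_2)\mid \mathtt{inl}(v)\mid\mathtt{inr}(v)$. Pure terms: $s,t::=v\mid s\,t\mid t;\vec{s}\mid \mathtt{let}\,(x_1,x_2)=t\,\mathtt{in}\,\vec{s}\mid \mathtt{match}\,t\,\{\mathtt{inl}\,x_1\mapsto\vec{s}_1\mid\mathtt{inr}\,x_2\mapsto\vec{s}_2\}$. Term distributions $\vec{t}::=\vec{0}\mid t\mid \vec{s}+\vec{t}\mid\alpha\cdot\vec{t}$ ($\alpha\in\mathbb{C}$). Top-level distributions are identified modulo the congruence generated by $\vec t+\vec0=\vec t$, $1\cdot\vec t=\vec t$, $\alpha\cdot(\beta\cdot\vec t)=\alpha\beta\cdot\vec t$, commutativity and associativity of $+$, $(\alpha+\beta)\cdot\vec t=\alpha\cdot\vec t+\beta\cdot\vec t$, $\alpha\cdot(\vec t_1+\vec t_2)=\alpha\cdot\vec t_1+\alpha\cdot\vec t_2$; it does not act inside pure terms, and $0\cdot t\neq\vec0$. Constructs are extended by linearity: pairs and application bilinear ($(\sum_k\gamma_kt_k)(\sum_l\delta_ls_l)=\sum_{k,l}\gamma_k\delta_lt_ks_l$), $\mathtt{inl},\mathtt{inr}$ linear, $\vec t;\vec s=\sum_k\gamma_k(t_k;\vec s)$ and similarly let and match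 linear in their first argument. Atomic evaluation $t\triangleright\vec t'$: $(\lambda x.\vec t)\,v\triangleright\vec t[x:=v]$; $*;\vec s\triangleright\vec s$; $\mathtt{let}\,(x,y)=(v,w)\,\mathtt{in}\,\vec s\triangleright\vec s[x:=v,y:=w]$; $\mathtt{match}\,\mathtt{inl}(v)\{\ldots\}\triangleright\vec s_1[x_1:=v]$; $\mathtt{match}\,\mathtt{inr}(v)\{\ldots\}\triangleright\vec s_2[x_2:=v]$; and if $t\triangleright\vec t'$ then $s\,t\triangleright s\,\vec t'$, $t\,v\triangleright\vec t'\,v$, $t;\vec s\triangleright\vec t';\vec s$, $\mathtt{let}\,(x,y)=t\,\mathtt{in}\,\vec s\triangleright\mathtt{let}\,(x,y)=\vec t'\,\mathtt{in}\,\vec s$, $\mathtt{match}\,t\{\ldots\}\triangleright\mathtt{match}\,\vec t'\{\ldots\}$ ($v,w$ pure values, $[x:=v]$ capture-avoiding substitution). One-step evaluation: $\vec t\succ\vec t'$ iff there are $\alpha\in\mathbb C$, a pure term $s$ and distributions $\vec s',\vec r$ with $\vec t=\alpha\cdot s+\vec r$, $\vec t'=\alpha\cdot\vec s'+\vec r$, $s\triangleright\vec s'$. $\succ^*$ is the reflexive-transitive closure of $\succ$. *)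

(* Defs.v *)
From Stdlib Require Import Reals Relations.
From Coquelicot Require Import Complex.

(* Binders: Lam binds 1 variable in its body; Let binds 2 variables in its body
   (x1 = index 1, x2 = index 0); each Match branch binds 1 variable. *)
Inductive val : Type :=
  | Var : nat -> val
  | Lam : tdist -> val
  | Star : val
  | Pair : val -> val -> val
  | Inl : val -> val
  | Inr : val -> val
with term : Type :=
  | Val : val -> term
  | App : term -> term -> term
  | Seq : term -> tdist -> term
  | Let : term -> tdist -> term
  | Match : term -> tdist -> tdist -> term
with tdist : Type :=
  | DZero : tdist
  | DPure : term -> tdist
  | DPlus : tdist -> tdist -> tdist
  | DScale : C -> tdist -> tdist.

Definition upren (xi : nat -> nat) : nat -> nat :=
  fun n => match n with 0 => 0 | S m => S (xi m) end.

Fixpoint ren_val (xi : nat -> nat) (v : val) : val :=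
  match v with
  | Var n => Var (xi n)
  | Lam d => Lam (ren_dist (upren xi) d)
  | Star => Star
  | Pair v1 v2 => Pair (ren_val xi v1) (ren_val xi v2)
  | Inl v1 => Inl (ren_val xi v1)
  | Inr v1 => Inr (ren_val xi v1)
  end
with ren_term (xi : nat -> nat) (t : term) : term :=
  match t with
  | Val v => Val (ren_val xi v)
  | App s u => App (ren_term xi s) (ren_term xi u)
  | Seq u d => Seq (ren_term xi u) (ren_dist xi d)
  | Let u d => Let (ren_term xi u) (ren_dist (upren (upren xi)) d)
  | Match u d1 d2 => Match (ren_term xi u) (ren_dist (upren xi) d1) (ren_dist (upren xi) d2)
  end
with ren_dist (xi : nat -> nat) (d : tdist) : tdist :=
  match d with
  | DZero => DZero
  | DPure t => DPure (ren_term xi t)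
  | DPlus d1 d2 => DPlus (ren_dist xi d1) (ren_dist xi d2)
  | DScale a d1 => DScale a (ren_dist xi d1)
  end.

Definition up (sigma : nat -> val) : nat -> val :=
  fun n => match n with 0 => Var 0 | S m => ren_val S (sigma m) end.

Fixpoint subst_val (sigma : nat -> val) (v : val) : val :=
  match v with
  | Var n => sigma n
  | Lam d => Lam (subst_dist (up sigma) d)
  | Star => Star
  | Pair v1 v2 => Pair (subst_val sigma v1) (subst_val sigma v2)
  | Inl v1 => Inl (subst_val sigma v1)
  | Inr v1 => Inr (subst_val sigma v1)
  end
with subst_term (sigma : nat -> val) (t : term) : term :=
  match t with
  | Val v => Val (subst_val sigma v)
  | App s u => App (subst_term sigma s) (subst_term sigma u)
  | Seq u d => Seq (subst_term sigma u) (subst_dist sigma d)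
  | Let u d => Let (subst_term sigma u) (subst_dist (up (up sigma)) d)
  | Match u d1 d2 =>
      Match (subst_term sigma u) (subst_dist (up sigma) d1) (subst_dist (up sigma) d2)
  end
with subst_dist (sigma : nat -> val) (d : tdist) : tdist :=
  match d with
  | DZero => DZero
  | DPure t => DPure (subst_term sigma t)
  | DPlus d1 d2 => DPlus (subst_dist sigma d1) (subst_dist sigma d2)
  | DScale a d1 => DScale a (subst_dist sigma d1)
  end.

Definition subst1 (v : val) (d : tdist) : tdist :=
  subst_dist (fun n => match n with 0 => v | S m => Var m end) d.

Definition subst2 (v w : val) (d : tdist) : tdist :=
  subst_dist (fun n => match n with 0 => w | 1 => v | S (S m) => Var m end) d.

(* Linear extension of a construct in one distribution argument:
   F(sum_k g_k t_k) = sum_k g_k F(t_k), computed leafwise. *)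
Fixpoint dmap (f : term -> term) (d : tdist) : tdist :=
  match d with
  | DZero => DZero
  | DPure t => DPure (f t)
  | DPlus d1 d2 => DPlus (dmap f d1) (dmap f d2)
  | DScale a d1 => DScale a (dmap f d1)
  end.

Inductive atom : term -> tdist -> Prop :=
  | at_beta : forall d v, atom (App (Val (Lam d)) (Val v)) (subst1 v d)
  | at_seq : forall d, atom (Seq (Val Star) d) d
  | at_let : forall v w d, atom (Let (Val (Pair v w)) d) (subst2 v w d)
  | at_inl : forall v d1 d2, atom (Match (Val (Inl v)) d1 d2) (subst1 v d1)
  | at_inr : forall v d1 d2, atom (Match (Val (Inr v)) d1 d2) (subst1 v d2)
  | at_app_r : forall s t d', atom t d' -> atom (App s t) (dmap (App s) d')
  | at_app_l : forall t v d', atom t d' ->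
      atom (App t (Val v)) (dmap (fun u => App u (Val v)) d')
  | at_seq_ctx : forall t d' d, atom t d' ->
      atom (Seq t d) (dmap (fun u => Seq u d) d')
  | at_let_ctx : forall t d' d, atom t d' ->
      atom (Let t d) (dmap (fun u => Let u d) d')
  | at_match_ctx : forall t d' d1 d2, atom t d' ->
      atom (Match t d1 d2) (dmap (fun u => Match u d1 d2) d') .

(* The congruence on top-level distributions (does not act inside pure terms) *)
Inductive dequiv : tdist -> tdist -> Prop :=
  | deq_refl : forall d, dequiv d d
  | deq_sym : forall d1 d2, dequiv d1 d2 -> dequiv d2 d1
  | deq_trans : forall d1 d2 d3, dequiv d1 d2 -> dequiv d2 d3 -> dequiv d1 d3
  | deq_plus : forall d1 d1' d2 d2', dequiv d1 d1' -> dequiv d2 d2' ->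
      dequiv (DPlus d1 d2) (DPlus d1' d2')
  | deq_scale : forall a d d', dequiv d d' -> dequiv (DScale a d) (DScale a d')
  | deq_zero : forall d, dequiv (DPlus d DZero) d
  | deq_one : forall d, dequiv (DScale (RtoC 1%R) d) d
  | deq_scale_scale : forall a b d, dequiv (DScale a (DScale b d)) (DScale (Cmult a b) d)
  | deq_comm : forall d1 d2, dequiv (DPlus d1 d2) (DPlus d2 d1)
  | deq_assoc : forall d1 d2 d3,
      dequiv (DPlus (DPlus d1 d2) d3) (DPlus d1 (DPlus d2 d3))
  | deq_distr_scalar : forall a b d,
      dequiv (DScale (Cplus a b) d) (DPlus (DScale a d) (DScale b d))
  | deq_distr_dist : forall a d1 d2,
      dequiv (DScale a (DPlus d1 d2)) (DPlus (DScale a d1) (DScale a d2)).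

Definition step (d d' : tdist) : Prop :=
  exists (a : C) (s : term) (s' r : tdist),
    atom s s' /\
    dequiv d (DPlus (DScale a (DPure s)) r) /\
    dequiv d' (DPlus (DScale a s') r).

(* Reflexive-transitive closure, on equivalence classes (hence the dequiv case) *)
Definition steps : tdist -> tdist -> Prop :=
  clos_refl_trans tdist (fun d d' => step d d' \/ dequiv d d').

(* Main.v *)
Require Import Defs.
From Stdlib Require Import Reals Relations.
From Coquelicot Require Import Complex.
From Stdlib Require Import List Permutation Classical ClassicalEpsilon.
Import ListNotations.

Local Open Scope C_scope.

Definition eqd (x y : term) : {x = y} + {x <> y} := excluded_middle_informative (x = y).

Fixpoint leaves (d : tdist) : list term :=
  match d with
  | DZero => []
  | DPure t => [t]
  | DPlus d1 d2 => leaves d1 ++ leaves d2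
  | DScale _ d => leaves d
  end.

Definition supp d v := In v (leaves d).

Definition e (s v : term) : C := if eqd s v then RtoC 1 else RtoC 0.

Fixpoint coef (d : tdist) (v : term) : C :=
  match d with
  | DZero => RtoC 0
  | DPure t => e t v
  | DPlus d1 d2 => coef d1 v + coef d2 v
  | DScale a d => a * coef d v
  end.

Definition Meq d1 d2 := (forall v, supp d1 v <-> supp d2 v) /\ (forall v, coef d1 v = coef d2 v).

Ltac is_atom X := match X with supp _ _ => idtac | In _ _ => idtac | @eq term _ _ => idtac end.
Ltac undecided X := lazymatch goal with
  | _ : X |- _ => fail | _ : ~ X |- _ => fail | _ => idtac end.
Ltac ctauto := repeat match goal with
  | |- context [?X] => is_atom X; undecided X; destruct (classic X)
  | H : context [?X] |- _ => is_atom X; undecided X; destruct (classic X)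
  end; tauto.

Lemma supp_plus d1 d2 v : supp (DPlus d1 d2) v <-> supp d1 v \/ supp d2 v.
Proof. unfold supp; simpl; apply in_app_iff. Qed.
Lemma supp_scale a d v : supp (DScale a d) v <-> supp d v.
Proof. reflexivity. Qed.
Lemma supp_pure t v : supp (DPure t) v <-> t = v.
Proof. unfold supp; simpl; tauto. Qed.
Lemma supp_zero v : supp DZero v <-> False.
Proof. unfold supp; simpl; tauto. Qed.

Lemma e_same s : e s s = RtoC 1.
Proof. unfold e; destruct (eqd s s); congruence. Qed.
Lemma e_diff s v : s <> v -> e s v = RtoC 0.
Proof. unfold e; destruct (eqd s v); congruence. Qed.

Lemma sound d1 d2 : dequiv d1 d2 -> Meq d1 d2.
Proof.
  unfold Meq; induction 1; simpl.
  - split; intros; reflexivity.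
  - destruct IHdequiv as [A B]; split; intro v; symmetry; auto.
  - destruct IHdequiv1 as [A B], IHdequiv2 as [A' B']; split; intro v.
    + rewrite A; auto. + rewrite B; auto.
  - destruct IHdequiv1 as [A B], IHdequiv2 as [A' B']; split; intro v.
    + rewrite !supp_plus, A, A'; tauto. + rewrite B, B'; auto.
  - destruct IHdequiv as [A B]; split; intro v.
    + rewrite !supp_scale; auto. + rewrite B; auto.
  - split; intro v. + rewrite supp_plus, supp_zero; tauto. + ring.
  - split; intro v. + reflexivity. + ring.
  - split; intro v. + reflexivity. + ring.
  - split; intro v. + rewrite !supp_plus; tauto. + ring.
  - split; intro v. + rewrite !supp_plus; tauto. + ring.
  - split; intro v. + rewrite !supp_plus, !supp_scale; tauto. + ring.
  - split; intro v. + rewrite !supp_plus, !supp_scale, supp_plus; tauto. + ring.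
Qed.

Lemma coef_out d v : ~ supp d v -> coef d v = RtoC 0.
Proof.
  induction d; simpl; intro H.
  - reflexivity.
  - apply e_diff. intro; apply H; apply supp_pure; auto.
  - rewrite supp_plus in H. rewrite IHd1, IHd2 by tauto. ring.
  - rewrite IHd by auto. ring.
Qed.

Fixpoint nf (l : list term) (f : term -> C) : tdist :=
  match l with
  | [] => DZero
  | v :: l => DPlus (DScale (f v) (DPure v)) (nf l f)
  end.

Lemma nf_ext l f g : (forall v, In v l -> f v = g v) -> nf l f = nf l g.
Proof.
  induction l; simpl; intros H; auto.
  rewrite H by auto. rewrite IHl; auto.
Qed.

Lemma nf_perm l l' f : Permutation l l' -> dequiv (nf l f) (nf l' f).
Proof.
  induction 1; simpl.
  - apply deq_refl.
  - apply deq_plus; auto using deq_refl.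
  - eapply deq_trans. apply deq_sym, deq_assoc.
    eapply deq_trans. apply deq_plus. apply deq_comm. apply deq_refl.
    apply deq_assoc.
  - eapply deq_trans; eauto.
Qed.

Lemma nf_same l l' f : NoDup l -> NoDup l' -> (forall x, In x l <-> In x l') ->
  dequiv (nf l f) (nf l' f).
Proof. intros; apply nf_perm, NoDup_Permutation; auto. Qed.

Lemma zero_scale0 : dequiv (DScale (RtoC 0) DZero) DZero.
Proof.
  assert (H: dequiv (DScale (RtoC 0 + RtoC 1) DZero) (DScale (RtoC 0) DZero)).
  { eapply deq_trans. apply deq_distr_scalar. eapply deq_trans. apply deq_plus.
    apply deq_refl. apply deq_one. apply deq_zero. }
  replace (RtoC 0 + RtoC 1) with (RtoC 1) in H by ring.
  eapply deq_trans. apply deq_sym, H. apply deq_one.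
Qed.

Lemma scale_zero a : dequiv (DScale a DZero) DZero.
Proof.
  eapply deq_trans. apply deq_scale, deq_sym, zero_scale0.
  eapply deq_trans. apply deq_scale_scale.
  replace (a * RtoC 0) with (RtoC 0) by ring. apply zero_scale0.
Qed.

Lemma scale_nf a l f : dequiv (DScale a (nf l f)) (nf l (fun v => a * f v)).
Proof.
  induction l; simpl.
  - apply scale_zero.
  - eapply deq_trans. apply deq_distr_dist. apply deq_plus; auto.
    apply deq_scale_scale.
Qed.

Lemma plus_zero_l d : dequiv (DPlus DZero d) d.
Proof. eapply deq_trans. apply deq_comm. apply deq_zero. Qed.

Lemma plus_shuffle a b c d :
  dequiv (DPlus (DPlus a b) (DPlus c d)) (DPlus (DPlus a c) (DPlus b d)).
Proof.
  eapply deq_trans. apply deq_assoc.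
  eapply deq_trans. apply deq_plus. apply deq_refl. apply deq_sym, deq_assoc.
  eapply deq_trans. apply deq_plus. apply deq_refl. apply deq_plus. apply deq_comm. apply deq_refl.
  eapply deq_trans. apply deq_plus. apply deq_refl. apply deq_assoc.
  apply deq_sym, deq_assoc.
Qed.

Lemma aux1 (P A B L A2 B2 : Prop) : ~P -> ((A \/ P \/ B) <-> ((P \/ L) \/ A2 \/ P \/ B2)) -> (A \/ B <-> L \/ A2 \/ B2).
Proof.
  intros np [h1 h2]; split.
  - intros h. assert (H: A \/ P \/ B) by (destruct h; auto). apply h1 in H.
    destruct H as [[p|l]|[a2|[p|b2]]]; [contradiction|auto|auto|contradiction|auto].
  - intros h. assert (H: (P \/ L) \/ A2 \/ P \/ B2) by (destruct h as [l|[a2|b2]]; auto).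
    apply h2 in H. destruct H as [a|[p|b]]; [auto|contradiction|auto].
Qed.

Lemma aux2 (P A B L L2 : Prop) : ~P -> ((A \/ P \/ B) <-> ((P \/ L) \/ L2)) -> (A \/ B <-> L \/ L2).
Proof.
  intros np [h1 h2]; split.
  - intros h. assert (H: A \/ P \/ B) by (destruct h; auto). apply h1 in H.
    destruct H as [[p|l]|l2]; [contradiction|auto|auto].
  - intros h. assert (H: (P \/ L) \/ L2) by (destruct h as [l|l2]; auto).
    apply h2 in H. destruct H as [a|[p|b]]; [auto|contradiction|auto].
Qed.

Lemma merge l1 : forall l2 l f1 f2, NoDup l1 -> NoDup l2 -> NoDup l ->
  (forall v, In v l <-> In v l1 \/ In v l2) ->
  (forall v, ~ In v l1 -> f1 v = RtoC 0) -> (forall v, ~ In v l2 -> f2 v = RtoC 0) ->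
  dequiv (DPlus (nf l1 f1) (nf l2 f2)) (nf l (fun v => f1 v + f2 v)).
Proof.
  induction l1 as [|x l1 IH]; intros l2 l f1 f2 N1 N2 N Hl Z1 Z2; simpl.
  - eapply deq_trans. apply plus_zero_l.
    rewrite (nf_ext l (fun v => f1 v + f2 v) f2).
    2:{ intros v _. rewrite Z1 by (simpl; tauto). ring. }
    apply nf_same; auto. intro v; rewrite Hl; simpl; tauto.
  - inversion N1 as [|? ? Nx N1']; subst.
    assert (Hxl : In x l) by (apply Hl; simpl; auto).
    destruct (in_split _ _ Hxl) as [A [B ->]].
    assert (NAB : NoDup (A ++ B)) by (eapply NoDup_remove_1; eauto).
    assert (NxAB : ~ In x (A ++ B)) by (eapply NoDup_remove_2; eauto).
    set (g1 := fun v => if eqd x v then RtoC 0 else f1 v).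
    assert (E1 : nf l1 f1 = nf l1 g1).
    { apply nf_ext. intros v Hv. unfold g1. destruct (eqd x v); subst; tauto. }
    assert (P : dequiv (nf (x :: A ++ B) (fun v => f1 v + f2 v))
                       (nf (A ++ x :: B) (fun v => f1 v + f2 v)))
      by (apply nf_perm, Permutation_middle).
    eapply deq_trans; [|exact P]. simpl.
    assert (Z1' : forall v, ~ In v l1 -> g1 v = RtoC 0).
    { intros v Hv. unfold g1. destruct (eqd x v); auto. apply Z1. simpl; intuition. }
    destruct (classic (In x l2)) as [Hx2|Hx2].
    + destruct (in_split _ _ Hx2) as [A2 [B2 ->]].
      assert (NAB2 : NoDup (A2 ++ B2)) by (eapply NoDup_remove_1; eauto).
      assert (NxAB2 : ~ In x (A2 ++ B2)) by (eapply NoDup_remove_2; eauto).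
      set (g2 := fun v => if eqd x v then RtoC 0 else f2 v).
      assert (P2 : dequiv (nf (A2 ++ x :: B2) f2) (nf (x :: A2 ++ B2) f2))
        by (apply nf_perm; apply Permutation_sym, Permutation_middle).
      eapply deq_trans. apply deq_plus. apply deq_refl. exact P2. simpl.
      eapply deq_trans. apply plus_shuffle.
      apply deq_plus.
      * apply deq_sym, deq_distr_scalar.
      * rewrite E1.
        rewrite (nf_ext (A2 ++ B2) f2 g2).
        2:{ intros v Hv. unfold g2. destruct (eqd x v); subst; tauto. }
        rewrite (nf_ext (A ++ B) _ (fun v => g1 v + g2 v)).
        2:{ intros v Hv. unfold g1, g2. destruct (eqd x v); subst; tauto. }
        apply IH; auto.
        -- intro v. destruct (eqd x v).
           ++ subst. split; [tauto|]. intros [H|H]; tauto.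
           ++ specialize (Hl v). rewrite !in_app_iff in Hl |- *. simpl in Hl. clear - Hl n. eapply aux1; eauto.
        -- intros v Hv. unfold g2. destruct (eqd x v); auto. apply Z2.
           rewrite in_app_iff in Hv |- *; simpl; clear - Hv n; intros [h|[h|h]]; auto.
    + eapply deq_trans. apply deq_assoc.
      apply deq_plus.
      * rewrite (Z2 x Hx2). replace (f1 x + RtoC 0) with (f1 x) by ring. apply deq_refl.
      * rewrite E1.
        rewrite (nf_ext (A ++ B) _ (fun v => g1 v + f2 v)).
        2:{ intros v Hv. unfold g1. destruct (eqd x v); subst; tauto. }
        apply IH; auto.
        intro v. destruct (eqd x v).
        -- subst. split; [intros h; exfalso; apply NxAB; exact h|].
           intros [h|h]; exfalso; [apply Nx; exact h| apply Hx2; exact h].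
        -- specialize (Hl v). rewrite !in_app_iff in Hl |- *. simpl in Hl. clear - Hl n. eapply aux2; eauto.
Qed.

Lemma to_nf d : forall l, NoDup l -> (forall v, In v l <-> supp d v) ->
  dequiv d (nf l (coef d)).
Proof.
  induction d; intros l N H.
  - destruct l as [|t l]. apply deq_refl. exfalso. apply (proj1 (H t)). simpl; auto.
  - eapply deq_trans; [|apply nf_same with (l := [t])].
    + simpl. rewrite e_same. eapply deq_trans; [|apply deq_sym, deq_zero].
      apply deq_sym, deq_one.
    + repeat constructor. simpl; auto.
    + exact N.
    + intro x. rewrite H, supp_pure. simpl. intuition.
  - set (l1 := nodup eqd (leaves d1)). set (l2 := nodup eqd (leaves d2)).
    eapply deq_trans. apply deq_plus.
    apply (IHd1 l1). apply NoDup_nodup. intro v; apply nodup_In.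
    apply (IHd2 l2). apply NoDup_nodup. intro v; apply nodup_In.
    apply merge; try apply NoDup_nodup; auto.
    + intro v. unfold l1, l2. rewrite !nodup_In, H, supp_plus. reflexivity.
    + intros v Hv. apply coef_out. unfold l1 in Hv. rewrite nodup_In in Hv. exact Hv.
    + intros v Hv. apply coef_out. unfold l2 in Hv. rewrite nodup_In in Hv. exact Hv.
  - eapply deq_trans. apply deq_scale. apply (IHd l N H).
    apply scale_nf.
Qed.

Lemma complete d1 d2 : Meq d1 d2 -> dequiv d1 d2.
Proof.
  intros [A B].
  set (l := nodup eqd (leaves d1)).
  eapply deq_trans. apply (to_nf d1 l). apply NoDup_nodup. intro v; apply nodup_In.
  rewrite (nf_ext l (coef d1) (coef d2)) by auto.
  apply deq_sym, to_nf. apply NoDup_nodup. intro v. unfold l. rewrite nodup_In. apply A.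
Qed.

Local Open Scope bool_scope.
Definition teqb (s v : term) : bool := if eqd s v then true else false.

Fixpoint suppb (d : tdist) (v : term) : bool :=
  match d with
  | DZero => false
  | DPure t => teqb t v
  | DPlus d1 d2 => suppb d1 v || suppb d2 v
  | DScale _ d => suppb d v
  end.

Ltac deqs := repeat match goal with |- context [eqd ?a ?b] => destruct (eqd a b) | H : context [eqd ?a ?b] |- _ => destruct (eqd a b) end.

Lemma suppb_spec d v : suppb d v = true <-> supp d v.
Proof.
  induction d; simpl.
  - unfold supp; simpl; split; [discriminate|tauto].
  - rewrite supp_pure. unfold teqb. deqs; split; congruence.
  - rewrite supp_plus, Bool.orb_true_iff, IHd1, IHd2. reflexivity.
  - rewrite supp_scale; auto.
Qed.

Lemma coef_outB d v : suppb d v = false -> coef d v = RtoC 0.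
Proof.
  intro H. apply coef_out. rewrite <- suppb_spec. congruence.
Qed.

Definition MeqB d1 d2 := (forall v, suppb d1 v = suppb d2 v) /\ (forall v, coef d1 v = coef d2 v).

Lemma soundB d1 d2 : dequiv d1 d2 -> MeqB d1 d2.
Proof.
  intro H. destruct (sound _ _ H) as [A B]. split; auto.
  intro v. apply Bool.eq_true_iff_eq. rewrite !suppb_spec. apply A.
Qed.

Lemma completeB d1 d2 : MeqB d1 d2 -> dequiv d1 d2.
Proof.
  intros [A B]. apply complete. split; auto.
  intro v. rewrite <- !suppb_spec, A. reflexivity.
Qed.

Fixpoint remove_d (u : term) (d : tdist) : tdist :=
  match d with
  | DZero => DZero
  | DPure t => if eqd u t then DZero else DPure t
  | DPlus d1 d2 => DPlus (remove_d u d1) (remove_d u d2)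
  | DScale a d => DScale a (remove_d u d)
  end.

Lemma remove_suppb u d v : suppb (remove_d u d) v = suppb d v && negb (teqb u v).
Proof.
  induction d; simpl.
  - reflexivity.
  - unfold teqb. destruct (eqd u t); subst; simpl; unfold teqb; deqs; subst; simpl; congruence.
  - rewrite IHd1, IHd2. destruct (suppb d1 v), (suppb d2 v), (teqb u v); reflexivity.
  - auto.
Qed.

Lemma remove_coef u d v : coef (remove_d u d) v = if eqd u v then RtoC 0 else coef d v.
Proof.
  induction d; simpl.
  - destruct (eqd u v); reflexivity.
  - destruct (eqd u t); subst; simpl.
    + destruct (eqd t v); subst. reflexivity. rewrite e_diff; auto.
    + destruct (eqd u v); subst; auto. rewrite e_diff; auto.
  - rewrite IHd1, IHd2. destruct (eqd u v); auto. ring.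
  - rewrite IHd. destruct (eqd u v); auto. ring.
Qed.

Lemma decomp y a D r : dequiv y (DPlus (DScale a D) r) ->
  (forall v, suppb y v = suppb D v || suppb r v) /\ (forall v, coef y v = a * coef D v + coef r v).
Proof. intro H. destruct (soundB _ _ H) as [A B]. split; intro v; [rewrite A|rewrite B]; reflexivity. Qed.

Ltac bsolve := repeat match goal with H : context [suppb _ _] |- _ => revert H end;
  repeat match goal with |- context [suppb ?d ?w] => destruct (suppb d w) end;
  simpl; intros; try reflexivity; try discriminate.

Lemma step_keep y a s D : atom s D -> suppb y s = true ->
  step y (DPlus (DScale a D) (DPlus y (DScale (- a) (DPure s)))).
Proof.
  intros A H. exists a, s, D, (DPlus y (DScale (- a) (DPure s))).
  split; [exact A|split; [|apply deq_refl]].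
  apply completeB. split; intro v; simpl.
  - unfold teqb; deqs; subst; bsolve.
  - ring.
Qed.

Lemma step_drop y a s D : atom s D -> suppb y s = true -> coef y s = a ->
  step y (DPlus (DScale a D) (remove_d s y)).
Proof.
  intros A H C. exists a, s, D, (remove_d s y).
  split; [exact A|split; [|apply deq_refl]].
  apply completeB. split; intro v; simpl.
  - rewrite remove_suppb. unfold teqb; deqs; subst; bsolve.
  - rewrite remove_coef. destruct (eqd s v); subst.
    + rewrite e_same. ring.
    + rewrite e_diff by auto. ring.
Qed.

Lemma step_resp_l x' x y : dequiv x' x -> step x y -> step x' y.
Proof.
  intros E (a & s & s' & r & A & H1 & H2). exists a, s, s', r. split; auto.
  split; auto. eapply deq_trans; eauto.
Qed.

Lemma step_resp_r x y y' : step x y -> dequiv y y' -> step x y'.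
Proof.
  intros (a & s & s' & r & A & H1 & H2) E. exists a, s, s', r. split; auto.
  split; auto. eapply deq_trans; [apply deq_sym; exact E|exact H2].
Qed.

Lemma val_nostep v d : ~ atom (Val v) d.
Proof. intro H; inversion H. Qed.

Lemma atom_det t d1 : atom t d1 -> forall d2, atom t d2 -> d1 = d2.
Proof.
  induction 1; intros dd HH; inversion HH; subst; try reflexivity;
  try (exfalso; eapply val_nostep; eassumption);
  try (f_equal; auto).
Qed.

Lemma side x y a1 s D1 r1 a2 u D2 r2 :
  s <> u -> atom s D1 -> atom u D2 ->
  dequiv x (DPlus (DScale a1 (DPure s)) r1) -> dequiv y (DPlus (DScale a1 D1) r1) ->
  dequiv x (DPlus (DScale a2 (DPure u)) r2) ->
  exists w, step y w /\
   (forall v, suppb w v = suppb D1 v || suppb D2 v ||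
        (suppb x v && (negb (teqb s v) || suppb r1 s) && (negb (teqb u v) || suppb r2 u))) /\
   (forall v, coef w v = coef x v - a1 * e s v + a1 * coef D1 v - a2 * e u v + a2 * coef D2 v).
Proof.
  intros Hsu A1 A2 X1 Y X2.
  destruct (decomp _ _ _ _ X1) as [X1s X1c].
  destruct (decomp _ _ _ _ Y) as [Ys Yc].
  destruct (decomp _ _ _ _ X2) as [X2s X2c].
  simpl in X1s, X1c, X2s, X2c.
  assert (r1u : suppb r1 u = true).
  { pose proof (X1s u) as E1. rewrite X2s in E1. unfold teqb in E1. deqs; simpl in E1; congruence. }
  assert (yu : suppb y u = true) by (rewrite Ys, r1u; apply Bool.orb_true_r).
  assert (Hr1 : forall v, coef r1 v = coef x v - a1 * e s v) by (intro v; rewrite X1c; ring).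
  destruct (suppb D1 u || suppb r2 u) eqn:K.
  - exists (DPlus (DScale a2 D2) (DPlus y (DScale (- a2) (DPure u)))).
    split; [apply step_keep; auto|split].
    + intro v. simpl. rewrite Ys, X1s. clear X1s X2s Ys X1c X2c Yc Hr1.
      unfold teqb; deqs; subst; try congruence; bsolve.
    + intro v. simpl. rewrite Yc, Hr1. ring.
  - apply Bool.orb_false_iff in K. destruct K as [K1 K2].
    assert (cyu : coef y u = a2).
    { rewrite Yc, Hr1, (coef_outB D1) by auto. rewrite X2c, (coef_outB r2) by auto.
      rewrite e_same, e_diff by auto. ring. }
    exists (DPlus (DScale a2 D2) (remove_d u y)).
    split; [apply step_drop; auto|split].
    + intro v. simpl. rewrite remove_suppb, Ys, X1s. clear X1s X2s Ys X1c X2c Yc Hr1.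
      unfold teqb; deqs; subst; try congruence; bsolve.
    + intro v. simpl. rewrite remove_coef. destruct (eqd u v).
      * subst v. rewrite X2c, (coef_outB r2) by auto. rewrite (coef_outB D1) by auto.
        rewrite e_same, e_diff by auto. ring.
      * rewrite (e_diff u v) by auto. rewrite Yc, Hr1. ring.
Qed.

Definition R (d d' : tdist) : Prop := step d d' \/ dequiv d d'.

Lemma same_F x y z a1 a2 s D r1 r2 : atom s D ->
  dequiv x (DPlus (DScale a1 (DPure s)) r1) -> dequiv y (DPlus (DScale a1 D) r1) ->
  dequiv x (DPlus (DScale a2 (DPure s)) r2) -> dequiv z (DPlus (DScale a2 D) r2) ->
  suppb y s = false -> exists w, R y w /\ R z w.
Proof.
  intros A X1 Y X2 Z Hy.
  destruct (decomp _ _ _ _ X1) as [X1s X1c].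
  destruct (decomp _ _ _ _ Y) as [Ys Yc].
  destruct (decomp _ _ _ _ X2) as [X2s X2c].
  destruct (decomp _ _ _ _ Z) as [Zs Zc].
  simpl in X1s, X1c, X2s, X2c.
  assert (Ds : suppb D s = false /\ suppb r1 s = false)
    by (apply Bool.orb_false_iff; rewrite <- Ys; exact Hy).
  destruct Ds as [Ds r1s].
  assert (cxs : coef x s = a1) by (rewrite X1c, e_same, (coef_outB r1) by auto; ring).
  assert (Hr1 : forall v, coef r1 v = coef x v - a1 * e s v) by (intro v; rewrite X1c; ring).
  assert (Hr2 : forall v, coef r2 v = coef x v - a2 * e s v) by (intro v; rewrite X2c; ring).
  assert (E : forall v, teqb s v || suppb r1 v = teqb s v || suppb r2 v)
    by (intro v; rewrite <- X1s, <- X2s; reflexivity).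
  exists y. split; [right; apply deq_refl|].
  destruct (suppb z s) eqn:Hz.
  - left. apply step_resp_r with (DPlus (DScale (a1 - a2) D) (remove_d s z)).
    + apply step_drop; auto. rewrite Zc, Hr2, (coef_outB D) by auto. rewrite e_same, cxs. ring.
    + apply completeB. split; intro v.
      * simpl. rewrite remove_suppb, Zs, Ys. specialize (E v).
        clear X1s X2s Ys Zs X1c X2c Yc Zc Hr1 Hr2.
        unfold teqb in *; deqs; subst; try congruence; bsolve.
      * simpl. rewrite remove_coef, Yc, Hr1. destruct (eqd s v).
        -- subst v. rewrite (coef_outB D) by auto. rewrite e_same, cxs. ring.
        -- rewrite Zc, Hr2, e_diff by auto. ring.
  - right. assert (r2s : suppb r2 s = false)
      by (rewrite Zs in Hz; apply Bool.orb_false_iff in Hz; tauto).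
    assert (a12 : a2 = a1) by (rewrite <- cxs, X2c, e_same, (coef_outB r2) by auto; ring).
    apply completeB. split; intro v.
    + rewrite Zs, Ys. specialize (E v).
      clear X1s X2s Ys Zs X1c X2c Yc Zc Hr1 Hr2.
      unfold teqb in *; deqs; subst; try congruence; bsolve.
    + rewrite Zc, Yc, Hr1, Hr2, a12. ring.
Qed.

Lemma both x y z a1 a2 s D r1 r2 : atom s D ->
  dequiv x (DPlus (DScale a1 (DPure s)) r1) -> dequiv y (DPlus (DScale a1 D) r1) ->
  dequiv x (DPlus (DScale a2 (DPure s)) r2) -> dequiv z (DPlus (DScale a2 D) r2) ->
  suppb y s = true -> suppb z s = true -> exists w, R y w /\ R z w.
Proof.
  intros A X1 Y X2 Z Hy Hz.
  destruct (decomp _ _ _ _ X1) as [X1s X1c].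
  destruct (decomp _ _ _ _ Y) as [Ys Yc].
  destruct (decomp _ _ _ _ X2) as [X2s X2c].
  destruct (decomp _ _ _ _ Z) as [Zs Zc].
  simpl in X1s, X1c, X2s, X2c.
  assert (Hr1 : forall v, coef r1 v = coef x v - a1 * e s v) by (intro v; rewrite X1c; ring).
  assert (Hr2 : forall v, coef r2 v = coef x v - a2 * e s v) by (intro v; rewrite X2c; ring).
  assert (E : forall v, teqb s v || suppb r1 v = teqb s v || suppb r2 v)
    by (intro v; rewrite <- X1s, <- X2s; reflexivity).
  exists (DPlus (DScale (a2 - a1) D) (DPlus y (DScale (- (a2 - a1)) (DPure s)))).
  split; [left; apply step_keep; auto|right].
  apply completeB. split; intro v.
  - simpl. rewrite Zs, Ys. rewrite Zs in Hz. specialize (E v).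
    clear X1s X2s Ys Zs X1c X2c Yc Zc Hr1 Hr2.
    unfold teqb in *; deqs; subst; try congruence; bsolve.
  - simpl. rewrite Zc, Yc, Hr1, Hr2. ring.
Qed.

Lemma diamond_step x y z : step x y -> step x z -> exists w, R y w /\ R z w.
Proof.
  intros (a1 & s & D1 & r1 & A1 & X1 & Y) (a2 & u & D2 & r2 & A2 & X2 & Z).
  destruct (classic (s = u)) as [<-|Hsu].
  - rewrite <- (atom_det _ _ A1 _ A2) in Z.
    destruct (suppb y s) eqn:Hy.
    + destruct (suppb z s) eqn:Hz.
      * apply (both x y z a1 a2 s D1 r1 r2 A1 X1 Y X2 Z Hy Hz).
      * destruct (same_F x z y a2 a1 s D1 r2 r1 A1 X2 Z X1 Y Hz) as [w [H1 H2]]. exists w; auto.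
    + apply (same_F x y z a1 a2 s D1 r1 r2 A1 X1 Y X2 Z Hy).
  - destruct (side x y a1 s D1 r1 a2 u D2 r2) as (w1 & S1 & W1s & W1c); auto.
    destruct (side x z a2 u D2 r2 a1 s D1 r1) as (w2 & S2 & W2s & W2c); auto.
    exists w1. split; [left; exact S1|left].
    apply step_resp_r with w2; auto.
    apply completeB. split; intro v.
    + rewrite W1s, W2s. clear. unfold teqb; deqs; subst; try congruence; bsolve.
    + rewrite W1c, W2c. ring.
Qed.

Lemma diamond x y z : R x y -> R x z -> exists w, R y w /\ R z w.
Proof.
  intros [Sy|Ey] [Sz|Ez].
  - apply (diamond_step x); auto.
  - exists y. split; [right; apply deq_refl|left].
    apply step_resp_l with x; auto. apply deq_sym; auto.
  - exists z. split; [left|right; apply deq_refl].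
    apply step_resp_l with x; auto. apply deq_sym; auto.
  - exists y. split; [right; apply deq_refl|right].
    eapply deq_trans; [apply deq_sym; exact Ez|exact Ey].
Qed.

Lemma strip x y : clos_refl_trans_1n _ R x y -> forall z, R x z ->
  exists w, R y w /\ clos_refl_trans_1n _ R z w.
Proof.
  induction 1 as [x|x x1 y Hx1 Hr IH]; intros z Hz.
  - exists z. split; [exact Hz|constructor].
  - destruct (diamond x x1 z Hx1 Hz) as [w1 [H1 H2]].
    destruct (IH w1 H1) as [w [Hyw Hw1w]].
    exists w. split; auto. econstructor; eauto.
Qed.

Lemma conf x z : clos_refl_trans_1n _ R x z -> forall y, clos_refl_trans_1n _ R x y ->
  exists w, clos_refl_trans_1n _ R y w /\ clos_refl_trans_1n _ R z w.
Proof.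
  induction 1 as [x|x x1 z Hx1 Hr IH]; intros y Hy.
  - exists y. split; [constructor|exact Hy].
  - destruct (strip x y Hy x1 Hx1) as [w1 [H1 H2]].
    destruct (IH w1 H2) as [w [Hw1 Hzw]].
    exists w. split; auto. econstructor; eauto.
Qed.

Theorem mainTheorem7 (t t1 t2 : tdist) :
  steps t t1 -> steps t t2 ->
  exists t'' : tdist, steps t1 t'' /\ steps t2 t''.
Proof.
  unfold steps. intros H1 H2.
  apply clos_rt_rt1n in H1. apply clos_rt_rt1n in H2.
  destruct (conf t t2 H2 t1 H1) as [w [A B]].
  exists w. split; apply clos_rt1n_rt; assumption.
Qed.
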